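(* Let $(A,\mu,\Delta,\alpha,\beta,\psi,\omega)$ be an infinitesimal BiHom-bialgebra (with $\mu(a\otimes b)=a\cdot b$). Define left and right actions of $A$ on $A\otimes A$ by $a\cdot(b\otimes c)=\omega(a)\cdot b\otimes\beta(c)$ and $(b\otimes c)\cdot a=\alpha(b)\otimes c\cdot\psi(a)$ for $a,b,c\in A$. Then $(A\otimes A,\alpha\otimes\alpha,\beta\otimes\beta)$ with these actions is an $A$-bimodule, and $\Delta$ is a derivation of $A$ with values in it, i.e. $\Delta(a\cdot b)=a\cdot\Delta(b)+\Delta(a)\cdot b$ for all $a,b\in A$.
   Context: Work over a field. A BiHom-associative algebra is a 4-tuple $(A,\mu,\alpha,\beta)$ with $\alpha,\beta$ commuting linear maps, multiplicative for $\mu$, and $\alpha(x)\cdot(y\cdot z)=(x\cdot y)\cdot\beta(z)$. A BiHom-coassociative coalgebra is $(C,\Delta,\psi,\omega)$ with $\psi\omega=\omega\psi$, $(\psi\otimes\psi)\Delta=\Delta\psi$, $(\omega\otimes\omega)\Delta=\Delta\omega$ and $(\Delta\otimes\psi)\Delta=(\omega\otimes\Delta)\Delta$. An infinitesimal BiHom-bialgebra is a 7-tuple $(A,\mu,\Delta,\alpha,\beta,\psi,\omega)$ with $(A,\mu,\alpha,\beta)$ BiHom-associative, $(A,\Delta,\psi,\omega)$ BiHom-coassociative, and for all $a,b$ (with $\Delta(a)=a_1\otimes a_2$): $\Delta(a\cdot b)=\omega(a)\cdot b_1\otimes\beta(b_2)+\alpha(a_1)\otimes a_2\cdot\psi(b)$;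 $\alpha\psi=\psi\alpha$, $\alpha\omega=\omega\alpha$, $\beta\psi=\psi\beta$, $\beta\omega=\omega\beta$; $(\alpha\otimes\alpha)\Delta=\Delta\alpha$, $(\beta\otimes\beta)\Delta=\Delta\beta$; $\psi,\omega$ multiplicative. For a BiHom-associative algebra $(A,\mu,\alpha,\beta)$ and $(M,\alpha_M,\beta_M)$ with commuting linear $\alpha_M,\beta_M$: $M$ is a left $A$-module via $a\otimes m\mapsto a\cdot m$ if $\alpha_M(a\cdot m)=\alpha(a)\cdot\alpha_M(m)$, $\beta_M(a\cdot m)=\beta(a)\cdot\beta_M(m)$, $\alpha(a)\cdot(a'\cdot m)=(a\cdot a')\cdot\beta_M(m)$; a right $A$-module via $m\otimes a\mapsto m\cdot a$ if $\alpha_M(m\cdot a)=\alpha_M(m)\cdot\alpha(a)$, $\beta_M(m\cdot a)=\beta_M(m)\cdot\beta(a)$, $\alpha_M(m)\cdot(a\cdot a')=(m\cdot a)\cdot\beta(a')$; an $A$-bimodule if both and $\alpha(a)\cdot(m\cdot a')=(a\cdot m)\cdot\beta(a')$. *)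

(* Defs.v *)
(* Tensor products are not in the library: we axiomatise a tensor product of
   two K-vector spaces by its universal property (as a record of data), and
   define the tensor product f (x) g of two maps by the defining property
   (f (x) g)(x (x) y) = f x (x) g y of a linear map. *)
From HB Require Import structures.
From mathcomp Require Import all_boot all_algebra.
From Stdlib Require Import ClassicalEpsilon.
Set Implicit Arguments. Unset Strict Implicit. Unset Printing Implicit Defensive.
Import GRing.Theory.
Local Open Scope ring_scope.

Section Tensor.
Variable K : fieldType.

Definition bilinear_map (U V W : lmodType K) (f : U -> V -> W) : Prop :=
  (forall u, linear (f u)) /\ (forall v, linear (fun u => f u v)).

Record tensor (U V : lmodType K) := Tensor {
  tsort :> lmodType K;
  tens : U -> V -> tsort;
  tens_bilinear : bilinear_map tens;
  tens_universal : forall (W : lmodType K) (f : U -> V -> W), bilinear_map f ->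
    exists h : tsort -> W, [/\ linear h, (forall u v, h (tens u v) = f u v) &
      forall h' : tsort -> W, linear h' -> (forall u v, h' (tens u v) = f u v) ->
        forall t, h' t = h t]
}.

Definition tmap (U1 V1 U2 V2 : lmodType K) (S : tensor U1 V1) (S' : tensor U2 V2)
  (f : U1 -> U2) (g : V1 -> V2) : S -> S' :=
  epsilon (inhabits (fun _ => 0))
    (fun h : S -> S' => linear h /\ forall u v, h (tens S u v) = tens S' (f u) (g v)).


Arguments tmap {U1 V1 U2 V2} S S' f g _.

Definition tassoc (U V W : lmodType K) (SUV : tensor U V) (SVW : tensor V W)
  (Sl : tensor SUV W) (Sr : tensor U SVW) : Sr -> Sl :=
  epsilon (inhabits (fun _ => 0))
    (fun h : Sr -> Sl => linear h /\ forall u v w,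
       h (tens Sr u (tens SVW v w)) = tens Sl (tens SUV u v) w).


Arguments tassoc {U V W SUV SVW} Sl Sr _.

Variable A : lmodType K.

Definition bihom_assoc (mul : A -> A -> A) (alpha beta : A -> A) : Prop :=
  [/\ [/\ bilinear_map mul, linear alpha & linear beta],
      forall x, alpha (beta x) = beta (alpha x),
      forall x y, alpha (mul x y) = mul (alpha x) (alpha y),
      forall x y, beta (mul x y) = mul (beta x) (beta y) &
      forall x y z, mul (alpha x) (mul y z) = mul (mul x y) (beta z)].

Definition bihom_coassoc (T2 : tensor A A) (T3l : tensor T2 A) (T3r : tensor A T2)
  (Delta : A -> T2) (psi omega : A -> A) : Prop :=
  [/\ [/\ linear Delta, linear psi & linear omega],
      forall x, psi (omega x) = omega (psi x),
      forall x, tmap T2 T2 psi psi (Delta x) = Delta (psi x),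
      forall x, tmap T2 T2 omega omega (Delta x) = Delta (omega x) &
      forall x, tmap T2 T3l Delta psi (Delta x)
                = tassoc T3l T3r (tmap T2 T3r omega Delta (Delta x))].

Definition mult_map (mul : A -> A -> A) (f : A -> A) :=
  forall x y, f (mul x y) = mul (f x) (f y).

Definition inf_bihom_bialg (T2 : tensor A A) (T3l : tensor T2 A) (T3r : tensor A T2)
  (mul : A -> A -> A) (Delta : A -> T2) (alpha beta psi omega : A -> A) : Prop :=
  [/\ bihom_assoc mul alpha beta /\
      bihom_coassoc T3l T3r Delta psi omega,
      forall a b, Delta (mul a b) =
        tmap T2 T2 (mul (omega a)) beta (Delta b)
        + tmap T2 T2 alpha (fun y => mul y (psi b)) (Delta a),
      [/\ forall x, alpha (psi x) = psi (alpha x),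
          forall x, alpha (omega x) = omega (alpha x),
          forall x, beta (psi x) = psi (beta x) &
          forall x, beta (omega x) = omega (beta x)],
      (forall x, tmap T2 T2 alpha alpha (Delta x) = Delta (alpha x)) /\
      (forall x, tmap T2 T2 beta beta (Delta x) = Delta (beta x)) &
      mult_map mul psi /\ mult_map mul omega].

(* modules over a BiHom-associative algebra (A, mu, alpha, beta);
   the action A (x) M -> M (resp. M (x) A -> M) is a linear map, i.e. a
   bilinear map on A * M. *)
Definition left_module (mul : A -> A -> A) (alpha beta : A -> A)
  (M : lmodType K) (alphaM betaM : M -> M) (act : A -> M -> M) : Prop :=
  [/\ [/\ bilinear_map act, linear alphaM & linear betaM],
      forall m, alphaM (betaM m) = betaM (alphaM m),
      forall a m, alphaM (act a m) = act (alpha a) (alphaM m),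
      forall a m, betaM (act a m) = act (beta a) (betaM m) &
      forall a a' m, act (alpha a) (act a' m) = act (mul a a') (betaM m)].

Definition right_module (mul : A -> A -> A) (alpha beta : A -> A)
  (M : lmodType K) (alphaM betaM : M -> M) (act : M -> A -> M) : Prop :=
  [/\ [/\ bilinear_map act, linear alphaM & linear betaM],
      forall m, alphaM (betaM m) = betaM (alphaM m),
      forall m a, alphaM (act m a) = act (alphaM m) (alpha a),
      forall m a, betaM (act m a) = act (betaM m) (beta a) &
      forall m a a', act (alphaM m) (mul a a') = act (act m a) (beta a')].

Definition bimodule (mul : A -> A -> A) (alpha beta : A -> A)
  (M : lmodType K) (alphaM betaM : M -> M)
  (lact : A -> M -> M) (ract : M -> A -> M) : Prop :=
  [/\ left_module mul alpha beta alphaM betaM lact,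
      right_module mul alpha beta alphaM betaM ract &
      forall a m a', lact (alpha a) (ract m a') = ract (lact a m) (beta a')].

End Tensor.

Arguments tmap {K U1 V1 U2 V2} S S' f g _.
Arguments tassoc {K U V W SUV SVW} Sl Sr _.

(* Main.v *)
Require Import Defs.
From mathcomp Require Import all_boot all_algebra.
From Stdlib Require Import ClassicalEpsilon.
Local Open Scope ring_scope.
Import GRing.Theory.
Set Implicit Arguments. Unset Strict Implicit.

Section Helpers.
Variable K : fieldType.

Lemma lin_comp (U V W : lmodType K) (f : V -> W) (g : U -> V) :
  linear f -> linear g -> linear (fun x => f (g x)).
Proof. by move=> Hf Hg a u v; rewrite Hg Hf. Qed.

Lemma lin_comb (U V : lmodType K) (h1 h2 : U -> V) (k : K) :
  linear h1 -> linear h2 -> linear (fun t => k *: h1 t + h2 t).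
Proof.
move=> H1 H2 a u v; rewrite H1 H2 !scalerDr !scalerA mulrC.
by rewrite -!addrA; congr (_ + _); rewrite addrCA.
Qed.

Lemma ext_tens (U V W : lmodType K) (S : tensor U V) (h1 h2 : S -> W) :
  linear h1 -> linear h2 -> (forall u v, h1 (tens S u v) = h2 (tens S u v)) ->
  forall t, h1 t = h2 t.
Proof.
move=> L1 L2 E t.
have [TB1 TB2] := tens_bilinear S.
have bil : bilinear_map (fun u v => h1 (tens S u v)).
  split=> [u|v] a x y /=; first by rewrite TB1 L1.
  by rewrite TB2 L1.
have [h0 [_ _ U0]] := tens_universal S bil.
rewrite (U0 h1 L1 (fun _ _ => erefl)) (U0 h2 L2) // => u v; by rewrite E.
Qed.

Lemma tmap_spec (U1 V1 U2 V2 : lmodType K) (S : tensor U1 V1) (S' : tensor U2 V2)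
  (f : U1 -> U2) (g : V1 -> V2) : linear f -> linear g ->
  linear (tmap S S' f g) /\ forall u v, tmap S S' f g (tens S u v) = tens S' (f u) (g v).
Proof.
move=> Lf Lg; rewrite /tmap.
apply: (epsilon_spec (inhabits (fun _ => 0))
  (fun h : S -> S' => linear h /\ forall u v, h (tens S u v) = tens S' (f u) (g v))).
have [TB1 TB2] := tens_bilinear S'.
have bil : bilinear_map (fun u v => tens S' (f u) (g v)).
  split=> [u|v] a x y /=; first by rewrite Lg TB1.
  by rewrite Lf TB2.
have [h0 [L0 E0 _]] := tens_universal S bil.
by exists h0.
Qed.

Lemma tmapL (U1 V1 U2 V2 : lmodType K) (S : tensor U1 V1) (S' : tensor U2 V2)
  (f : U1 -> U2) (g : V1 -> V2) : linear f -> linear g -> linear (tmap S S' f g).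
Proof. by move=> Lf Lg; case: (tmap_spec S S' Lf Lg). Qed.

Lemma tmapT (U1 V1 U2 V2 : lmodType K) (S : tensor U1 V1) (S' : tensor U2 V2)
  (f : U1 -> U2) (g : V1 -> V2) : linear f -> linear g ->
  forall u v, tmap S S' f g (tens S u v) = tens S' (f u) (g v).
Proof. by move=> Lf Lg; case: (tmap_spec S S' Lf Lg). Qed.

End Helpers.
Arguments ext_tens {K U V W S} h1 h2.


Ltac lin0 := match goal with
  | H : _ |- _ => exact: H
  | H : forall _ : _, _ |- _ => exact: (H _) end.
Ltac lin := first [lin0 | apply: tmapL; lin0 | apply: lin_comp; apply: tmapL; lin0].
Ltac teq := apply: ext_tens; [lin|lin|move=> u v /=; rewrite !tmapT; try lin].

Theorem lemma4p2 (K : fieldType) (A : lmodType K) (T2 : tensor A A)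
  (T3l : tensor T2 A) (T3r : tensor A T2)
  (mul : A -> A -> A) (Delta : A -> T2) (alpha beta psi omega : A -> A) :
  inf_bihom_bialg T3l T3r mul Delta alpha beta psi omega ->
  let lact := fun (a : A) (t : T2) => tmap T2 T2 (mul (omega a)) beta t in
  let ract := fun (t : T2) (a : A) => tmap T2 T2 alpha (fun y => mul y (psi a)) t in
  bimodule mul alpha beta (tmap T2 T2 alpha alpha) (tmap T2 T2 beta beta) lact ract /\
  (forall a b, Delta (mul a b) = lact a (Delta b) + ract (Delta a) b).
Proof.
move=> [[HA HC] HD [Hap Hao Hbp Hbo] _ [Mpsi Momg]] /=.
split; last exact: HD.
have [[[Mul1 Mul2] La Lb] Hab Ham Hbm Hass] := HA.
have [[_ Lp Lo] _ _ _ _] := HC.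
have [TB1 TB2] := tens_bilinear T2.
have Ml u : linear (mul u) by exact: Mul1.
have Mr v : linear (fun u => mul u v) by exact: Mul2.
have MrE v k x y : mul (k *: x + y) v = k *: mul x v + mul y v by exact: Mr.
have TB2E v k x y : tens T2 (k *: x + y) v = k *: tens T2 x v + tens T2 y v by exact: TB2.
have MlE v k x y : mul v (k *: x + y) = k *: mul v x + mul v y by exact: Ml.
have TB1E v k x y : tens T2 v (k *: x + y) = k *: tens T2 v x + tens T2 v y by exact: TB1.
have Lm a : linear (mul (omega a)) by exact: Ml.
have Lr a : linear (fun u => mul u (psi a)) by exact: Mr.
have LAA := tmapL (S:=T2) T2 La La.
have LBB := tmapL (S:=T2) T2 Lb Lb.
have LL a := tmapL (S:=T2) T2 (Lm a) Lb.
have LR a := tmapL (S:=T2) T2 La (Lr a).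
split; [split; [split; [split|exact: LAA|exact: LBB]|..]|split; [split; [split|exact: LAA|exact: LBB]|..]|].
- by [].
- move=> t k a b; move: t.
  apply: (ext_tens _ (fun t => k *: _ + _)); [lin| apply: lin_comb; lin|move=> u v /=; rewrite !tmapT; try lin].
  by rewrite Lo MrE TB2E.
- by teq; rewrite !Hab.
- by move=> a; teq; rewrite Ham Hao Hab.
- by move=> a; teq; rewrite Hbm Hbo.
- by move=> a a'; teq; rewrite Momg -Hao Hass.
- move=> t k a b; move: t.
  apply: (ext_tens _ (fun t => k *: _ + _)); [lin| apply: lin_comb; lin|move=> u v /=; rewrite !tmapT; try lin].
  by rewrite Lp MlE TB1E.
- by [].
- by teq; rewrite !Hab.
- by move=> m a; move: m; teq; rewrite Ham Hap.
- by move=> m a; move: m; teq; rewrite Hbm Hbp Hab.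
- by move=> m a a'; move: m; teq; rewrite Mpsi -Hbp Hass.
- by move=> a m a'; move: m; teq; rewrite Ham Hao Hbm Hbp.
Qed.
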